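(* Let $d\ge 2$ and consider a linear multiparameter eigenvalue problem $W_i(\mathbf{x})\mathbf{v}_i=\big(V_{i0}-\sum_{j=1}^d x_jV_{ij}\big)\mathbf{v}_i=0$, $1\le i\le d$, with $V_{ij}\in\mathbb{C}^{n_i\times n_i}$. Let $f_{\text{Dixon}}$ be the tensor Dixon function of $P_i=W_i$ with $x_d$ hidden. Then $f_{\text{Dixon}}$ does not depend on $s_1,\dots,s_{d-1},t_1,\dots,t_{d-1}$, and the generalized eigenvalue problem $f_{\text{Dixon}}(x_d)\mathbf{z}=0$ it yields is the same as the operator determinant generalized eigenvalue problem $(\Delta_d-x_d\Delta_0)\mathbf{z}=0$; precisely, $f_{\text{Dixon}}=c\,(\Delta_d-x_d\Delta_0)$ for some $c\in\{1,-1\}$.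
   Context: Kronecker block determinant: for a $d\times d$ array $M=(M_{ij})$ with $M_{ij}$ of size $n_i\times n_i$, $|M|_\otimes=\sum_{\sigma\in S_d}\mathrm{sgn}(\sigma)\,M_{1,\sigma(1)}\otimes M_{2,\sigma(2)}\otimes\cdots\otimes M_{d,\sigma(d)}$. Operator determinants: $\Delta_0=|(V_{ij})_{1\le i,j\le d}|_\otimes$, and $\Delta_d$ is the Kronecker block determinant of the array obtained from $(V_{ij})_{1\le i,j\le d}$ by replacing its $d$-th column with $(V_{10},\dots,V_{d0})^\top$. Tensor Dixon function with $x_d$ hidden: with variables $s_1,\dots,s_{d-1},t_1,\dots,t_{d-1},x_d$, let $M_{ij}=P_i(t_1,\dots,t_{j-1},s_j,\dots,s_{d-1},x_d)$ for $1\le i,j\le d$ (column $1$ at $(s_1,\dots,s_{d-1},x_d)$, column $d$ at $(t_1,\dots,t_{d-1},x_d)$), and $f_{\text{Dixon}}=|M|_\otimes/\prod_{i=1}^{d-1}(s_i-t_i)$. *)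

(* Defs.v *)
From HB Require Import structures.
From mathcomp Require Import all_boot all_order all_algebra all_fingroup.
From mathcomp Require Import mxtens complex.
From mathcomp Require Import reals.
Set Implicit Arguments. Unset Strict Implicit. Unset Printing Implicit Defensive.
Import GRing.Theory.
Local Open Scope ring_scope.

(* All indexing is 0-based for the rows (block row i here = row i+1 of the
   paper) and for the block columns (block column c here = column c+1 of the
   paper).  The second index of V keeps the paper's meaning:
   V i 0 = V_{i+1,0}, V i j = V_{i+1,j} for 1 <= j <= d.
   Variables x_1..x_d are a function x : nat -> C (only 1..d used). *)

Fixpoint kdim (n : nat -> nat) (k : nat) : nat :=
  if k is k'.+1 then (kdim n k' * n k')%N else 1%N.

Fixpoint ktens (R : pzRingType) (n : nat -> nat) (k : nat)
    (A : forall i : nat, 'M[R]_(n i)) : 'M[R]_(kdim n k) :=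
  if k is k'.+1 then ktens k' A *t A k' else 1%:M.

Definition perm_nat (d : nat) (s : 'S_d) (i : nat) : nat :=
  if insub i is Some j then nat_of_ord (s j) else i.

Definition kbdet (R : comPzRingType) (d : nat) (n : nat -> nat)
    (M : forall i : nat, nat -> 'M[R]_(n i)) : 'M[R]_(kdim n d) :=
  \sum_(s : 'S_d) (-1) ^+ s *: ktens d (fun i => M i (perm_nat s i)).

Definition Delta0 (R : comPzRingType) d n (V : forall i : nat, nat -> 'M[R]_(n i)) :=
  kbdet d (fun i j => V i j.+1).

Definition Deltad (R : comPzRingType) d n (V : forall i : nat, nat -> 'M[R]_(n i)) :=
  kbdet d (fun i j => if j == d.-1 then V i 0%N else V i j.+1).

Definition Wmp (R : comPzRingType) d n (V : forall i : nat, nat -> 'M[R]_(n i))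
    (i : nat) (x : nat -> R) : 'M[R]_(n i) :=
  V i 0%N - \sum_(1 <= j < d.+1) x j *: V i j.

Definition dixon_pt (R : Type) (d : nat) (s t : nat -> R) (xd : R) (c : nat) :
    nat -> R :=
  fun k => if k == d then xd else if (k <= c)%N then t k else s k.

Definition fDixon (R : fieldType) d n (V : forall i : nat, nat -> 'M[R]_(n i))
    (s t : nat -> R) (xd : R) : 'M[R]_(kdim n d) :=
  (\prod_(1 <= k < d) (s k - t k))^-1 *:
    kbdet d (fun i c => Wmp d V i (dixon_pt d s t xd c)).

(* Main.v *)
Require Import Defs.
From HB Require Import structures.
From mathcomp Require Import all_boot all_order all_algebra all_fingroup.
From mathcomp Require Import mxtens complex.
From mathcomp Require Import reals.
From mathcomp Require Import zify.
Import GRing.Theory.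
Local Open Scope ring_scope.

Set Implicit Arguments. Unset Strict Implicit. Unset Printing Implicit Defensive.

Section K.
Variable R : comPzRingType.
Variable n : nat -> nat.

Lemma tensmxDZl m1 m2 (A B : 'M[R]_m1) (C : 'M[R]_m2) a :
  (a *: A + B) *t C = a *: (A *t C) + B *t C.
Proof. by apply/matrixP => i j; rewrite !mxE mulrDl mulrA. Qed.

Lemma tensmxDZr m1 m2 (A B : 'M[R]_m1) (C : 'M[R]_m2) a :
  C *t (a *: A + B) = a *: (C *t A) + C *t B.
Proof. by apply/matrixP => i j; rewrite !mxE mulrDr mulrCA. Qed.

Lemma ktens_ext k (A B : forall i, 'M[R]_(n i)) :
  (forall i, (i < k)%N -> A i = B i) -> ktens k A = ktens k B.
Proof.
elim: k => [//|k IH] H /=; rewrite (IH) ?H //.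
by move=> i Hi; apply: H; apply: leqW.
Qed.

Lemma ktens_lin k i0 a (X Y A : forall i, 'M[R]_(n i)) : (i0 < k)%N ->
  ktens k (fun i => if i == i0 then a *: X i + Y i else A i) =
  a *: ktens k (fun i => if i == i0 then X i else A i) +
  ktens k (fun i => if i == i0 then Y i else A i).
Proof.
elim: k => [//|k IH] Hi /=.
have [e|ne] := eqVneq i0 k.
  subst i0.
  have E: forall Z : forall i, 'M[R]_(n i),
      ktens k (fun i => if i == k then Z i else A i) = ktens k A.
    by move=> Z; apply: ktens_ext => i /ltn_eqF ->.
  rewrite (E (fun i => a *: X i + Y i)) (E X) (E Y) ?eqxx.
  exact: tensmxDZr.
have Hik : (i0 < k)%N by rewrite ltn_neqAle ne -ltnS.
by rewrite IH // ?(eq_sym k) ?(negbTE ne) tensmxDZl.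
Qed.

Lemma perm_natE d (s : 'S_d) (j : 'I_d) : perm_nat s j = s j.
Proof. by rewrite /perm_nat valK. Qed.

Lemma perm_nat_lt d (s : 'S_d) i : (i < d)%N -> (perm_nat s i < d)%N.
Proof. by move=> Hi; change i with (nat_of_ord (Ordinal Hi)); rewrite perm_natE. Qed.

Implicit Types M N : forall i : nat, nat -> 'M[R]_(n i).

Lemma kbdet_ext d M N : (forall i j, (i < d)%N -> (j < d)%N -> M i j = N i j) ->
  kbdet d M = kbdet d N.
Proof.
move=> H; apply: eq_bigr => s _; congr (_ *: _); apply: ktens_ext => i Hi.
by apply: H => //; apply: perm_nat_lt.
Qed.

Definition setcol M (c : nat) (X : forall i, 'M[R]_(n i)) :
  forall i : nat, nat -> 'M[R]_(n i) :=
  fun i j => if j == c then X i else M i j.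

Lemma kbdet_setcol_ext d M c X Y : (forall i, X i = Y i) ->
  kbdet d (setcol M c X) = kbdet d (setcol M c Y).
Proof. by move=> H; apply: kbdet_ext => i j _ _; rewrite /setcol H. Qed.

Lemma kbdet_lin d M c a X Y : (c < d)%N ->
  kbdet d (setcol M c (fun i => a *: X i + Y i)) =
  a *: kbdet d (setcol M c X) + kbdet d (setcol M c Y).
Proof.
move=> Hc; rewrite /kbdet scaler_sumr -big_split /=; apply: eq_bigr => s _.
pose c' := Ordinal Hc; pose i0 := nat_of_ord (s^-1 c')%g.
have E: forall Z : forall i, 'M[R]_(n i),
   ktens d (fun i => setcol M c Z i (perm_nat s i)) =
   ktens d (fun i => if i == i0 then Z i else M i (perm_nat s i)).
  move=> Z; apply: ktens_ext => i Hi; rewrite /setcol.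
  have -> : (perm_nat s i == c) = (i == i0).
    change i with (nat_of_ord (Ordinal Hi)); change c with (nat_of_ord c'); rewrite perm_natE.
    rewrite /i0 !val_eqE; apply/eqP/eqP => [<-|->]; by rewrite ?permK ?permKV.
  by [].
rewrite !E ktens_lin ?ltn_ord // scalerDr !scalerA mulrC //.
Qed.

Lemma kbdet_alt d M c1 c2 : (c1 < d)%N -> (c2 < d)%N -> c1 != c2 ->
  (forall i, M i c1 = M i c2) -> kbdet d M = 0.
Proof.
move=> H1 H2 ne eqM; pose o1 := Ordinal H1; pose o2 := Ordinal H2.
pose t := tperm o1 o2.
have ne' : o1 != o2 by rewrite -val_eqE.
have oddMt s: odd_perm (s * t)%g = ~~ odd_perm s.
  by rewrite odd_permM odd_tperm ne' addbT.
rewrite /kbdet (bigID (@odd_perm _)) /=.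
apply: canLR (subrK _) _; rewrite add0r -sumrN.
rewrite (reindex_inj (mulIg t)); apply: eq_big => //= s.
rewrite oddMt => /negPf->; rewrite /= expr1 expr0 scaleN1r scale1r; congr (- _).
apply: ktens_ext => i Hi; change i with (nat_of_ord (Ordinal Hi)); rewrite !perm_natE permM /t.
by case: tpermP => [->|->|] //=; rewrite eqM.
Qed.

Lemma kbdet_perm d M (p : 'S_d) :
  kbdet d (fun i j => M i (perm_nat p j)) = (-1) ^+ p *: kbdet d M.
Proof.
rewrite /kbdet scaler_sumr (reindex_inj (mulIg (p^-1)%g)) /=; apply: eq_bigr => s _.
rewrite odd_permM odd_permV signr_addb scalerA [_ * (-1) ^+ p]mulrC.
congr (_ *: _); apply: ktens_ext => i Hi.
by change i with (nat_of_ord (Ordinal Hi)); rewrite !perm_natE permM permKV.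
Qed.

End K.

Section Main.
Variable F : fieldType.
Variables (d : nat) (n : nat -> nat) (V : forall i : nat, nat -> 'M[F]_(n i)).
Variables (s t : nat -> F) (xd : F).

Definition Wc i c := Wmp d V i (dixon_pt d s t xd c).

Lemma Wc_diff m i : (m.+1 < d)%N ->
  Wc i m.+1 = (s m.+1 - t m.+1) *: V i m.+1 + Wc i m.
Proof.
move=> Hm; rewrite /Wc /Wmp.
have key : \sum_(1 <= j < d.+1) dixon_pt d s t xd m.+1 j *: V i j =
   \sum_(1 <= j < d.+1) dixon_pt d s t xd m j *: V i j
   + (t m.+1 - s m.+1) *: V i m.+1.
  apply/eqP; rewrite addrC -subr_eq; apply/eqP.
  rewrite -sumrB; under eq_bigr do rewrite -scalerBl.
  rewrite (bigD1_seq m.+1) ?mem_index_iota ?iota_uniq //=; last by lia.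
  rewrite big1 ?addr0.
    by rewrite /dixon_pt (ltn_eqF Hm) leqnn ltnn.
  move=> j ne; rewrite /dixon_pt; case: eqP => _; first by rewrite subrr scale0r.
  case: (leqP j m) => h; first by rewrite (leqW h) subrr scale0r.
  have -> : (j <= m.+1)%N = false by move/eqP: ne; lia.
  by rewrite subrr scale0r.
by rewrite key opprD addrA addrC -scaleNr opprB.
Qed.

Definition H m : forall i : nat, nat -> 'M[F]_(n i) :=
  fun i j => if (j <= m)%N then Wc i j else V i j.

Lemma kbdet_H_step m : (m.+1 < d)%N ->
  kbdet d (H m.+1) = (s m.+1 - t m.+1) *: kbdet d (H m).
Proof.
move=> Hm.
have -> : kbdet d (H m.+1) = kbdet d (setcol (H m) m.+1
      (fun i => (s m.+1 - t m.+1) *: V i m.+1 + Wc i m)).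
  apply: kbdet_ext => i j _ _; rewrite /setcol /H; case: eqVneq => [->|ne].
    by rewrite leqnn Wc_diff.
  by rewrite leq_eqVlt (negbTE ne) ltnS.
rewrite kbdet_lin; last by [].
have Hm' : (m < d)%N by apply: ltnW.
have Hne : m != m.+1 by rewrite (ltn_eqF (ltnSn m)).
have Heq : forall i, setcol (H m) m.+1 (Wc^~ m) i m = setcol (H m) m.+1 (Wc^~ m) i m.+1.
  by move=> i; rewrite /setcol /H eqxx (ltn_eqF (ltnSn m)) leqnn.
rewrite (kbdet_alt Hm' Hm Hne Heq).
rewrite addr0; congr (_ *: _); apply: kbdet_ext => i j _ _.
by rewrite /setcol /H; case: eqVneq => [->|//]; rewrite ltnn.
Qed.

Lemma kbdet_H m : (m < d)%N ->
  kbdet d (H m) = (\prod_(1 <= k < m.+1) (s k - t k)) *: kbdet d (H 0).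
Proof.
elim: m => [|m IH] Hm.
  by rewrite big_geq ?scale1r.
have Hm' : (m < d)%N by apply: ltnW.
rewrite (kbdet_H_step Hm) (IH Hm') (big_nat_recr _ _ _ (ltn0Sn m)).
by rewrite scalerA mulrC.
Qed.

Lemma kbdet_rem m (B : forall i, 'M[F]_(n i)) : (m <= d)%N ->
  kbdet d (setcol V 0 (fun i => B i - \sum_(1 <= j < m) s j *: V i j)) =
  kbdet d (setcol V 0 B).
Proof.
elim: m B => [|m IH] B Hm.
  by apply: kbdet_setcol_ext => i; rewrite big_geq ?subr0.
case: (posnP m) => [m0|mpos].
  by subst m; apply: kbdet_setcol_ext => i; rewrite big_geq ?subr0.
have Hm1 : (1 <= m)%N by [].
rewrite (@kbdet_setcol_ext _ _ d V 0 _
   (fun i => (- s m) *: V i m + (B i - \sum_(1 <= j < m) s j *: V i j))); last first.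
  by move=> i; rewrite (big_nat_recr _ _ _ Hm1) opprD addrA addrC scaleNr.
have d0 : (0 < d)%N by lia.
have md : (m < d)%N by lia.
have Hne : 0 != m by rewrite eq_sym -lt0n.
have Heq : forall i, setcol V 0 (fun i => V i m) i 0 = setcol V 0 (fun i => V i m) i m.
  by move=> i; rewrite /setcol eqxx (gtn_eqF mpos).
rewrite (kbdet_lin _ _ _ _ d0) (kbdet_alt d0 md Hne Heq) scaler0 add0r.
by apply: IH; apply: ltnW.
Qed.

Definition Acol i := V i 0 - xd *: V i d.

Lemma kbdet_H0 : (0 < d)%N -> kbdet d (H 0) = kbdet d (setcol V 0 Acol).
Proof.
move=> d0.
rewrite -(@kbdet_rem d Acol (leqnn d)); apply: kbdet_ext => i j _ _.
rewrite /H /setcol leqn0; case: eqP => [->|]; last by [].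
rewrite /Wc /Wmp (big_nat_recr _ _ _ d0) /dixon_pt eqxx /Acol.
rewrite (@eq_big_nat _ _ _ 1 d _ (fun j => s j *: V i j)); last first.
  move=> k hk; rewrite (ltn_eqF (proj2 (andP hk))).
  by have -> : (k <= 0)%N = false by lia.
by rewrite opprD addrA addrAC.
Qed.

Definition G m : forall i : nat, nat -> 'M[F]_(n i) :=
  fun i j => if (j < m)%N then V i j.+1 else if j == m then Acol i else V i j.

Lemma G_step m : (m.+1 < d)%N -> kbdet d (G m.+1) = - kbdet d (G m).
Proof.
move=> Hm.
pose p := tperm (Ordinal (ltnW Hm)) (Ordinal Hm) : 'S_d.
have sg : (-1) ^+ p = -1 :> F.
  have -> : odd_perm p = true.
    rewrite odd_tperm; apply/negP => /eqP/(congr1 val) e; simpl in e; lia.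
  by rewrite expr1.
have := kbdet_perm (G m) p.
rewrite sg scaleN1r => <-.
apply: kbdet_ext => i j _ Hj.
change j with (nat_of_ord (Ordinal Hj)); rewrite perm_natE.
case: tpermP => [e|e|n1 n2].
- move/(congr1 val): e => e; simpl in e.
  change (G m.+1 i j = G m i m.+1); rewrite e.
  rewrite /G ltnSn.
  have -> : (m.+1 < m)%N = false by lia.
  by rewrite (gtn_eqF (ltnSn m)).
- move/(congr1 val): e => e; simpl in e.
  change (G m.+1 i j = G m i m); rewrite e.
  by rewrite /G ltnn eqxx ltnn eqxx.
- have n1' : j != m by apply/eqP => e; apply: n1; apply: val_inj.
  have n2' : j != m.+1 by apply/eqP => e; apply: n2; apply: val_inj.
  change (G m.+1 i j = G m i j); rewrite /G.
  have -> : (j < m.+1)%N = (j < m)%N by rewrite ltnS leq_eqVlt (negbTE n1').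
  by rewrite (negbTE n1') (negbTE n2').
Qed.

Lemma G_all m : (m < d)%N -> kbdet d (G m) = (-1) ^+ m *: kbdet d (G 0).
Proof.
elim: m => [|m IH] Hm; first by rewrite expr0 scale1r.
have Hm' : (m < d)%N by apply: ltnW.
by rewrite (G_step Hm) (IH Hm') exprS mulN1r scaleNr.
Qed.

Lemma main_lemma : (2 <= d)%N -> (forall k : nat, (0 < k < d)%N -> s k != t k) ->
  fDixon d V s t xd = (-1) ^+ d.-1 *: (Deltad d V - xd *: Delta0 d V).
Proof.
move=> Hd Hst.
have Hd1 : (d.-1 < d)%N by lia.
have d0 : (0 < d)%N by lia.
have E1 : kbdet d (fun i c => Wmp d V i (dixon_pt d s t xd c)) = kbdet d (H d.-1).
  apply: kbdet_ext => i j _ Hj; rewrite /H.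
  by have -> : (j <= d.-1)%N = true by lia.
have Pd : d.-1.+1 = d by lia.
have Pnz : \prod_(1 <= k < d) (s k - t k) != 0.
  rewrite prodf_seq_neq0; apply/allP => k; rewrite mem_index_iota => hk.
  by apply/implyP => _; rewrite subr_eq0; apply: Hst; lia.
rewrite /fDixon E1 (kbdet_H Hd1) Pd scalerA (mulVf Pnz) scale1r.
rewrite (kbdet_H0 d0).
have -> : kbdet d (setcol V 0 Acol) = kbdet d (G 0).
  apply: kbdet_ext => i j _ _; rewrite /G /setcol ltn0; by [].
have sq : (-1) ^+ d.-1 * (-1) ^+ d.-1 = 1 :> F.
  by have := signrMK d.-1 (1 : F); rewrite mulr1.
have -> : kbdet d (G 0) = (-1) ^+ d.-1 *: kbdet d (G d.-1).
  by rewrite (G_all Hd1) scalerA sq scale1r.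
congr (_ *: _).
have -> : kbdet d (G d.-1) = kbdet d (setcol (fun i j => V i j.+1) d.-1
     (fun i => (- xd) *: V i d + V i 0)).
  apply: kbdet_ext => i j _ Hj; rewrite /G /setcol.
  case: eqVneq => [->|ne]; first by rewrite ltnn /Acol addrC scaleNr.
  by have -> : (j < d.-1)%N = true by move/eqP: ne; lia.
rewrite (kbdet_lin _ _ _ _ Hd1) addrC scaleNr.
congr (_ - _ *: _).
apply: kbdet_ext => i j _ _; rewrite /setcol.
case: eqVneq => [->|]; [by rewrite Pd | by []].
Qed.

End Main.

Theorem propositionA1 (R : realType) (d : nat) (n : nat -> nat)
    (V : forall i : nat, nat -> 'M[complex R]_(n i)) :
  (2 <= d)%N ->
  exists c : complex R, (c = 1 \/ c = -1) /\
    forall (s t : nat -> complex R) (xd : complex R),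
      (forall k : nat, (0 < k < d)%N -> s k != t k) ->
      fDixon d V s t xd = c *: (Deltad d V - xd *: Delta0 d V).
Proof.
move=> Hd; exists ((-1) ^+ d.-1); split.
  by rewrite -signr_odd; case: (odd d.-1); [right; rewrite expr1|left; rewrite expr0].
by move=> s t xd Hst; apply: main_lemma.
Qed.
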